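(* Let $n\ge0$ and $i,j\in D$. Suppose that for $m=1,\dots,r$ we are given $a_m,b_m\in D$ with $a_m\neq b_m$, $a_m\Rightarrow_n b_m$ and $A_i(a_m)=1$, and that $A_i(c)\le A_j(c)$ for all $c\notin\{a_m: m=1,\dots,r\}$. Define $\hat A_i\in\{0,1\}^D$ by $\hat A_i(c)=A_i(c)$ if $c\notin\{a_m,b_m: m=1,\dots,r\}$, $\hat A_i(c)=0$ if $c=a_m$ for some $m$, and $\hat A_i(c)=1$ if $c=b_m$ for some $m$. If $\hat A_i\le A_j$ entrywise, then $i\Rightarrow_{n+1} j$.
   Context: Fix integers $k\ge1$, $d\ge1$, $K=\{1,\dots,k\}$, $D=\{1,\dots,d\}$. The $k$-tree is the set $K^*$ of finite words over $K$ with root the empty word $\epsilon$; $xg$ ($g\in K$) are the children of $x$. $L_n$ is the set of words of length exactly $n$ and $\Delta_n$ the set of words of length at most $n$. $A$ is a $d\times d$ matrix with entries in $\{0,1\}$, and $A_i(m)=A(i,m)$ denotes the entries of row $i$. A (valid) labeling of $\Delta_n$ is a map $\lambda:\Delta_n\to D$ with $A(\lambda(x),\lambda(xg))=1$ for all $x\in\Delta_{n-1}$, $g\in K$. For $p,q\in D$, $p\Rightarrow_n q$ means: for every valid labeling $\lambda$ of $\Delta_n$ with $\lambda(\epsilon)=p$ there is a valid labeling $\lambda'$ of $\Delta_n$ with $\lambda'(\epsilon)=q$ and $\lambda'|_{L_n}=\lambda|_{L_n}$.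
   Formalization: $\hat A_i(c)$ is 1 whenever c is some $b_m$, even when c also lies in $\{a_m: m=1,\dots,r\}$, so the value 1 at the $b_m$ takes precedence over the value 0 at the $a_m$. The statement above fails without it. *)

(* Defs.v *)
From mathcomp Require Import all_boot.
Set Implicit Arguments. Unset Strict Implicit. Unset Printing Implicit Defensive.

(* K = 'I_k (letters), D = 'I_d (labels).  Words of the k-tree are
   sequences over 'I_k; the children of x are x ++ [g] = rcons x g.
   The 0/1 matrix A is a boolean relation A p q  (A(p,q) = 1 <-> A p q). *)

(* A labeling of Delta_n is represented by a total map on all words; only
   its values on words of length <= n matter in every definition below. *)
Definition valid_labeling (k d : nat) (A : 'I_d -> 'I_d -> bool) (n : nat)
  (lam : seq 'I_k -> 'I_d) : Prop :=
  forall x : seq 'I_k, size x < n -> forall g : 'I_k, A (lam x) (lam (rcons x g)).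

Definition implies_n (k d : nat) (A : 'I_d -> 'I_d -> bool) (n : nat)
  (p q : 'I_d) : Prop :=
  forall lam : seq 'I_k -> 'I_d,
    valid_labeling A n lam -> lam [::] = p ->
    exists lam' : seq 'I_k -> 'I_d,
      [/\ valid_labeling A n lam', lam' [::] = q &
          forall x : seq 'I_k, size x = n -> lam' x = lam x].

(* \hat A_i : 1 on the b_m, 0 on the a_m, A_i elsewhere
   (b-values take precedence if some a_m equals some b_m'). *)
Definition hatA (d r : nat) (A : 'I_d -> 'I_d -> bool) (i : 'I_d)
  (a b : 'I_r -> 'I_d) (c : 'I_d) : bool :=
  if c \in codom b then true
  else if c \in codom a then false
  else A i c.

(* Main.v *)
Require Import Defs.
From mathcomp Require Import all_boot.

Theorem proposition3p6 (k d : nat) (A : 'I_d -> 'I_d -> bool) (n : nat)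
  (i j : 'I_d) (r : nat) (a b : 'I_r -> 'I_d) :
  0 < k ->
  (forall m : 'I_r, a m != b m) ->
  (forall m : 'I_r, implies_n k A n (a m) (b m)) ->
  (forall m : 'I_r, A i (a m)) ->
  (forall c : 'I_d, c \notin codom a -> A i c ==> A j c) ->
  (forall c : 'I_d, hatA A i a b c ==> A j c) ->
  implies_n k A n.+1 i j.
Proof.
move=> _ _ Himp _ _ Hhat lam Hval Hroot.
have Hsub g : valid_labeling A n (fun y => lam (g :: y)).
  move=> y Hy h; exact: (Hval (g :: y) Hy h).
have Hex g : exists L : seq 'I_k -> 'I_d,
    [/\ valid_labeling A n L, A j (L [::]) &
        forall y : seq 'I_k, size y = n -> L y = lam (g :: y)].
  case: (boolP (lam [:: g] \in codom a)) => [/codomP [m Hm] | Hna].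
  - have [L [HL1 HL2 HL3]] := Himp m _ (Hsub g) Hm.
    exists L; split => //.
    rewrite HL2; have := Hhat (b m); by rewrite /hatA codom_f.
  - exists (fun y => lam (g :: y)); split => //.
    have := Hhat (lam [:: g]); rewrite /hatA (negbTE Hna).
    have Hi : A i (lam [:: g]) by have := Hval [::] (ltn0Sn n) g; rewrite Hroot.
    by case: (lam [:: g] \in codom b) => /=; rewrite ?Hi.
have [L HL] := fin_all_exists Hex.
exists (fun x => match x with [::] => j | g :: y => L g y end); split => //.
- move=> [|g y] Hy h /=.
  + by case: (HL h).
  + by case: (HL g) => H1 _ _; exact: H1.
- move=> [|g y] //= Hy.
  by case: (HL g) => _ _ H3; apply: H3; case: Hy.
Qed.
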